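(* Let $\mathcal{L}:\mathbb{R}^d\to\mathbb{R}$ be differentiable on $\mathbb{R}^d\setminus\{\mathbf{0}\}$ and radially invariant. Consider two runs $S$ and $\tilde S$ of the generic optimization scheme $$\mathbf{x}_{k+1}=\mathbf{x}_k-\eta_k\,\mathbf{a}_k\oslash\mathbf{b}_k,\qquad \mathbf{a}_k=\beta\mathbf{a}_{k-1}+\nabla\mathcal{L}(\mathbf{x}_k)+\lambda\mathbf{x}_k$$ (the second with its own $\tilde\eta_k,\tilde\beta,\tilde\lambda,\tilde{\mathbf{b}}_k$, iterates $\tilde{\mathbf{x}}_k$, etc.), with nonzero iterates and $\mathbf{b}_k,\tilde{\mathbf{b}}_k$ having nonzero entries, and for each run define $r_k=\|\mathbf{x}_k\|$, $\mathbf{u}_k=\mathbf{x}_k/r_k$, $\mathbf{c}_k=r_k\mathbf{a}_k\oslash\frac{\mathbf{b}_k}{d^{-1/2}\|\mathbf{b}_k\|}$, $A_k=\frac{\eta_k}{r_k^2 d^{-1/2}\|\mathbf{b}_k\|}$, $\eta^e_k=A_k(1-A_k\langle\mathbf{c}_k,\mathbf{u}_k\rangle)^{-1}$, $\mathbf{c}_k^\perp=\mathbf{c}_k-\langle\mathbf{c}_k,\mathbf{u}_k\rangle\mathbf{u}_k$ (and analogously with tildes). Assume $1-A_k\langle\mathbf{c}_k,\mathbf{u}_k\rangle>0$ and $1-\tilde A_k\langle\tilde{\mathbf{c}}_k,\tilde{\mathbf{u}}_k\rangle>0$ for all $k$. If $\mathbf{u}_0=\tilde{\mathbf{u}}_0$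 and for all $k\ge0$, $\eta^e_k=\tilde\eta^e_k$ and $\mathbf{c}^\perp_k=\tilde{\mathbf{c}}^\perp_k$, then $\mathbf{u}_k=\tilde{\mathbf{u}}_k$ for all $k\ge0$.
   Context: $\oslash$ denotes element-wise division; $\|\cdot\|$ and $\langle\cdot,\cdot\rangle$ are Euclidean. Radially invariant means $\mathcal{L}(\rho\mathbf{x})=\mathcal{L}(\mathbf{x})$ for all $\rho>0$. *)

(* Defs.v *)
From HB Require Import structures.
From mathcomp Require Import all_boot all_order all_algebra.
From mathcomp Require Import all_classical all_reals all_analysis.
Set Implicit Arguments. Unset Strict Implicit. Unset Printing Implicit Defensive.
Import Order.TTheory GRing.Theory Num.Theory.
Import numFieldNormedType.Exports.
Local Open Scope ring_scope.

Section Defs.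
Context {R : realType} {d : nat}.
Implicit Types (v w : 'rV[R]_d).

Definition dotp v w : R := \sum_(i < d) v 0 i * w 0 i.
Definition enorm v : R := Num.sqrt (dotp v v).
Definition ediv v w : 'rV[R]_d := \row_i (v 0 i / w 0 i).

Definition ebasis (i : 'I_d) : 'rV[R]_d := \row_j (if j == i then 1 else 0).
Definition grad (L : 'rV[R]_d -> R) (x : 'rV[R]_d) : 'rV[R]_d :=
  \row_i ('D_(ebasis i) L x).

Definition radially_invariant (L : 'rV[R]_d -> R) : Prop :=
  forall (x : 'rV[R]_d) (rho : R), 0 < rho -> L (rho *: x) = L x.

(* a run of x_{k+1} = x_k - eta_k a_k ⊘ b_k,
   a_k = beta a_{k-1} + grad L(x_k) + lambda x_k, with a_{-1} = am1 *)
Definition is_run (L : 'rV[R]_d -> R) (eta : nat -> R) (beta lam : R)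
  (am1 : 'rV[R]_d) (x a b : nat -> 'rV[R]_d) : Prop :=
  [/\ forall k, x k.+1 = x k - eta k *: ediv (a k) (b k),
      a 0%N = beta *: am1 + grad L (x 0%N) + lam *: x 0%N
    & forall k, a k.+1 = beta *: a k + grad L (x k.+1) + lam *: x k.+1].

Definition bscale (b : nat -> 'rV[R]_d) k : R := (Num.sqrt (d%:R))^-1 * enorm (b k).
Definition rr (x : nat -> 'rV[R]_d) k : R := enorm (x k).
Definition uu (x : nat -> 'rV[R]_d) k : 'rV[R]_d := (rr x k)^-1 *: x k.
Definition cc (x a b : nat -> 'rV[R]_d) k : 'rV[R]_d :=
  rr x k *: ediv (a k) (\row_i (b k 0 i / bscale b k)).
Definition AA (eta : nat -> R) (x b : nat -> 'rV[R]_d) k : R :=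
  eta k / (rr x k ^+ 2 * bscale b k).
Definition denom eta (x a b : nat -> 'rV[R]_d) k : R :=
  1 - AA eta x b k * dotp (cc x a b k) (uu x k).
Definition eta_eff eta (x a b : nat -> 'rV[R]_d) k : R :=
  AA eta x b k * (denom eta x a b k)^-1.
Definition cperp (x a b : nat -> 'rV[R]_d) k : 'rV[R]_d :=
  cc x a b k - dotp (cc x a b k) (uu x k) *: uu x k.

End Defs.

(* Main.v *)
Require Import Defs.
From HB Require Import structures.
From mathcomp Require Import all_boot all_order all_algebra.
From mathcomp Require Import all_classical all_reals all_analysis.
From mathcomp Require Import ring lra.
Import Order.TTheory GRing.Theory Num.Theory.
Import numFieldNormedType.Exports.
Local Open Scope ring_scope.
Local Open Scope classical_set_scope.

Section Aux.
Context {R : realType} {d : nat}.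
Implicit Types (v w : 'rV[R]_d).

Lemma enorm_eq0 v : enorm v = 0 -> v = 0.
Proof.
rewrite /enorm => /eqP; rewrite sqrtr_eq0 => H.
have H0 : dotp v v = 0.
  apply/le_anti; rewrite H /= /dotp sumr_ge0 // => i _.
  by rewrite -expr2 sqr_ge0.
have Hv : forall i : 'I_d, true -> v 0 i * v 0 i = 0.
  apply: psumr_eq0P H0 => i _; by rewrite -expr2 sqr_ge0.
apply/rowP => i; rewrite mxE.
have /eqP := Hv i isT.
by rewrite mulf_eq0 orbb => /eqP.
Qed.

Lemma enorm_ge0 v : 0 <= enorm v.
Proof. exact: sqrtr_ge0. Qed.

Lemma enormZ l v : enorm (l *: v) = `|l| * enorm v.
Proof.
rewrite /enorm /dotp.
have -> : \sum_(i < d) (l *: v) 0 i * (l *: v) 0 i = l ^+ 2 * \sum_(i < d) v 0 i * v 0 i.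
  rewrite mulr_sumr; apply: eq_bigr => i _; rewrite !mxE; ring.
by rewrite sqrtrM ?sqr_ge0 // sqrtr_sqr.
Qed.

Lemma normZ l w : 0 < l -> (enorm (l *: w))^-1 *: (l *: w) = (enorm w)^-1 *: w.
Proof.
move=> lp; rewrite enormZ gtr0_norm // invfM scalerA.
by rewrite [l^-1 * _]mulrC -mulrA mulVf ?mulr1 // gt_eqF.
Qed.

Lemma step L eta beta lam am1 (x a b : nat -> 'rV[R]_d) k :
  (0 < d)%N ->
  is_run L eta beta lam am1 x a b -> x k != 0 -> (forall i, b k 0 i != 0) ->
  0 < denom eta x a b k ->
  uu x k.+1 = (enorm (uu x k - eta_eff eta x a b k *: cperp x a b k))^-1 *:
              (uu x k - eta_eff eta x a b k *: cperp x a b k).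
Proof.
move=> d0 [Hx _ _] xk bk Dp.
have r0 : rr x k != 0 by apply/eqP => /enorm_eq0 /eqP; rewrite (negbTE xk).
have rp : 0 < rr x k by rewrite lt_neqAle eq_sym r0 enorm_ge0.
have s0 : bscale b k != 0.
  rewrite /bscale mulf_eq0 invr_eq0 sqrtr_eq0 negb_or -ltNge ltr0n d0 /=.
  apply/eqP => /enorm_eq0 /rowP /(_ (Ordinal d0)); rewrite mxE => /eqP.
  by rewrite (negbTE (bk _)).
have D0 : denom eta x a b k != 0 by rewrite gt_eqF.
have E : x k.+1 = (rr x k * denom eta x a b k) *:
   (uu x k - eta_eff eta x a b k *: cperp x a b k).
  move: D0; rewrite Hx /eta_eff /cperp /denom /AA /uu /cc.
  set t := dotp _ _; set r := rr x k; set s := bscale b k => D0.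
  have rs0 : r ^+ 2 * s != 0 by rewrite mulf_neq0 ?expf_neq0.
  apply/rowP => i; rewrite !mxE.
  have := bk i; set bi := b k 0 i => bi0.
  field; rewrite ?r0 ?s0 ?bi0 //.
  have key : forall X e u : R, X != 0 -> X - e * u = X * (1 - e / X * u).
    by move=> X e u X0; field.
  rewrite key //.
  by rewrite mulf_neq0.
rewrite /uu /rr E normZ // mulr_gt0 //.
Qed.

End Aux.

Theorem lemma3 (R : realType) (d : nat) (L : 'rV[R]_d -> R)
  (eta eta' : nat -> R) (beta beta' lam lam' : R) (am1 am1' : 'rV[R]_d)
  (x a b x' a' b' : nat -> 'rV[R]_d) :
  (forall y : 'rV[R]_d, y != 0 -> differentiable L y) ->
  radially_invariant L ->
  is_run L eta beta lam am1 x a b ->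
  is_run L eta' beta' lam' am1' x' a' b' ->
  (forall k, x k != 0) -> (forall k, x' k != 0) ->
  (forall k (i : 'I_d), b k 0 i != 0) -> (forall k (i : 'I_d), b' k 0 i != 0) ->
  (forall k, 0 < denom eta x a b k) -> (forall k, 0 < denom eta' x' a' b' k) ->
  uu x 0%N = uu x' 0%N ->
  (forall k, eta_eff eta x a b k = eta_eff eta' x' a' b' k) ->
  (forall k, cperp x a b k = cperp x' a' b' k) ->
  forall k, uu x k = uu x' k.
Proof.
move=> _ _ H H' xn xn' bn bn' Dp Dp' u0 He Hc.
case: d L am1 am1' x a b x' a' b' H H' xn xn' bn bn' Dp Dp' u0 He Hc
  => [|d] L am1 am1' x a b x' a' b' H H' xn xn' bn bn' Dp Dp' u0 He Hc k.
  by apply/rowP => -[i Hi].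
elim: k => [//|k IH].
by rewrite (@step R d.+1 _ _ _ _ _ _ _ _ k isT H (xn k) (bn k) (Dp k)) (@step R d.+1 _ _ _ _ _ _ _ _ k isT H' (xn' k) (bn' k) (Dp' k)) IH He Hc.
Qed.
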